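(* Let $h$ be a positive integer. The sequences $(n_h(k))_{k=1}^{\infty}$, $(m_h(k))_{k=1}^{\infty}$, $(n^{\sharp}_h(k))_{k=1}^{\infty}$, and $(m^{\sharp}_h(k))_{k=1}^{\infty}$ are strictly increasing.
   Context: For integers $a<b$, an interval of integers is $[a,b]=\{j\in\mathbf{Z}: a\le j\le b\}$ (so every interval has at least two elements), and $[0,0]=\{0\}$. For a set $A$ of integers, $hA=\{a_1+\cdots+a_h: a_i\in A\}$ (summands not necessarily distinct). For a nonempty finite set $A\subseteq\mathbf{Z}$ with $0\in hA$, $\ell_h(A)$ is the largest integer $n\ge 0$ with $[0,n]\subseteq hA$. For a nonempty finite set $A\subseteq\mathbf{Z}$, $\ell^{\sharp}_h(A)$ is the largest integer $n\ge 1$ such that $[c,c+n]\subseteq hA$ for some $c\in\mathbf{Z}$ (undefined if $hA$ contains no interval). With $\mathcal{A}_X(k)=\{A\subseteq X:|A|=k\}$ and $\mathbf{N}_0=\{0,1,2,\ldots\}$, define (maxima over those $A$ for which the quantity is defined) $n_h(k)=\max\{\ell_h(A): A\in\mathcal{A}_{\mathbf{N}_0}(k)\}$, $n^{\sharp}_h(k)=\max\{\ell^{\sharp}_h(A): A\in\mathcal{A}_{\mathbf{N}_0}(k)\}$, $m_h(k)=\max\{\ell_h(A): A\in\mathcal{A}_{\mathbf{Z}}(k)\}$, $m^{\sharp}_h(k)=\max\{\ell^{\sharp}_h(A): A\in\mathcal{A}_{\mathbf{Z}}(k)\}$. *)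

(* Defs.v *)
From HB Require Import structures.
From mathcomp Require Import all_boot all_order all_algebra.
From mathcomp Require Import finmap.
Set Implicit Arguments. Unset Strict Implicit. Unset Printing Implicit Defensive.
Import Order.TTheory GRing.Theory Num.Theory.
Local Open Scope fset_scope.
Local Open Scope ring_scope.

Definition in_hsum (h : nat) (A : {fset int}) (x : int) : Prop :=
  exists s : seq int,
    size s = h /\ (forall a, a \in s -> a \in A) /\ \sum_(a <- s) a = x.

Definition interval_in_hsum (h : nat) (A : {fset int}) (a b : int) : Prop :=
  forall j : int, a <= j <= b -> in_hsum h A j.

Definition is_ell (h : nat) (A : {fset int}) (n : nat) : Prop :=
  interval_in_hsum h A 0 n%:Z /\
  (forall m : nat, interval_in_hsum h A 0 m%:Z -> (m <= n)%N).

Definition is_ell_sharp (h : nat) (A : {fset int}) (n : nat) : Prop :=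
  (1 <= n)%N /\ (exists c : int, interval_in_hsum h A c (c + n%:Z)) /\
  (forall m : nat, (1 <= m)%N ->
     (exists c : int, interval_in_hsum h A c (c + m%:Z)) -> (m <= n)%N).

Definition is_max_over (Adm : {fset int} -> Prop)
  (L : {fset int} -> nat -> Prop) (k v : nat) : Prop :=
  (exists A : {fset int}, Adm A /\ #|` A| = k /\ L A v) /\
  (forall (A : {fset int}) (l : nat), Adm A -> #|` A| = k -> L A l -> (l <= v)%N).

Definition subset_N0 (A : {fset int}) : Prop := forall a, a \in A -> 0 <= a.
Definition subset_Z (A : {fset int}) : Prop := True.

(* is_n h k v  <->  n_h(k) = v, etc. *)
Definition is_n (h k v : nat) := is_max_over subset_N0 (is_ell h) k v.
Definition is_n_sharp (h k v : nat) := is_max_over subset_N0 (is_ell_sharp h) k v.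
Definition is_m (h k v : nat) := is_max_over subset_Z (is_ell h) k v.
Definition is_m_sharp (h k v : nat) := is_max_over subset_Z (is_ell_sharp h) k v.

(* The (partially defined) sequence f, starting at index k0, is well defined
   and strictly increasing: f(k) < f(k+1) for all k >= k0. *)
Definition strictly_increasing_from (f : nat -> nat -> Prop) (k0 : nat) : Prop :=
  forall k : nat, (k0 <= k)%N ->
    exists v v' : nat, f k v /\ f k.+1 v' /\ (v < v')%N.

(* Main.v *)
Require Import Defs.
From mathcomp Require Import all_boot all_order all_algebra.
From mathcomp Require Import finmap zify.
From Stdlib Require Import Classical.
Set Implicit Arguments. Unset Strict Implicit. Unset Printing Implicit Defensive.
Import Order.TTheory GRing.Theory Num.Theory.
Local Open Scope fset_scope.
Local Open Scope ring_scope.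

Lemma largest (P : nat -> Prop) (B m0 : nat) : P m0 -> (forall m, P m -> (m <= B)%N) ->
  exists n, P n /\ forall m, P m -> (m <= n)%N.
Proof.
move=> Pm0 HB.
suff: forall d m0, (B - m0 <= d)%N -> P m0 -> exists n, P n /\ forall m, P m -> (m <= n)%N.
  by move=> /(_ (B - m0)%N m0 (leqnn _) Pm0).
elim=> [|d IH] m1 Hd Pm1.
  exists m1; split=> // m Pm; have := HB _ Pm; lia.
case: (classic (exists m, P m /\ (m1 < m)%N)) => [[m [Pm lt]]|nex].
  apply: (IH m) => //; have := HB _ Pm; lia.
exists m1; split=> // m Pm; case: (leqP m m1) => // lt; case: nex; by exists m.
Qed.

Fixpoint hl (h : nat) (s : seq int) : seq int :=
  if h is h'.+1 then [seq a + x | a <- s, x <- hl h' s] else [:: 0].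

Lemma size_hl h s : size (hl h s) = (size s ^ h)%N.
Proof. by elim: h => //= h IH; rewrite size_allpairs IH expnS. Qed.

Lemma hsum_hl h (A : {fset int}) x : in_hsum h A x -> x \in hl h (enum_fset A).
Proof.
elim: h x => [|h IH] x [s [sz [sA <-]]].
  by case: s sz sA => // _ _; rewrite big_nil inE.
case: s sz sA => // a t [sz] sA /=.
rewrite big_cons; apply: allpairs_f; first by apply: sA; rewrite inE eqxx.
apply: IH; exists t; split=> //; split=> // b bt; by apply: sA; rewrite inE bt orbT.
Qed.

Lemma interval_bound h (A : {fset int}) c (m : nat) :
  interval_in_hsum h A c (c + m%:Z) -> (m.+1 <= #|` A| ^ h)%N.
Proof.
move=> H; rewrite -size_hl.
have -> : m.+1 = size [seq c + i%:Z | i <- iota 0 m.+1] by rewrite size_map size_iota.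
apply: uniq_leq_size.
  rewrite map_inj_uniq ?iota_uniq // => i j; move=> /addrI [] //.
move=> y /mapP [i]; rewrite mem_iota add0n => ilt ->.
apply: hsum_hl; apply: H; apply/andP; split; first by rewrite lerDl.
by rewrite lerD2l lez_nat -ltnS.
Qed.

Lemma seq_min (s : seq int) : s != [::] ->
  exists2 a, a \in s & (size s)%:Z * a <= \sum_(x <- s) x.
Proof.
elim: s => // x t IH _.
case: t IH => [|y t] IH.
  by exists x; rewrite ?inE ?eqxx // big_cons big_nil /= mul1r addr0.
have [b bt Hb] := IH isT.
rewrite big_cons.
case: (lerP x b) => xb.
  exists x; first by rewrite inE eqxx.
  rewrite [size _]/= -addn1 PoszD mulrDl mul1r addrC lerD2l.
  apply: le_trans Hb; rewrite ler_wpM2l //.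
exists b; first by rewrite inE bt orbT.
rewrite [size (x :: _)]/= -addn1 PoszD mulrDl mul1r addrC.
by apply: lerD => //; apply: ltW.
Qed.

Lemma sum_nseq0 (a : int) n : \sum_(y <- nseq n a) y = a *+ n.
Proof. by elim: n => [|n IH]; rewrite ?big_nil // /= big_cons IH mulrS. Qed.

Lemma sum_nseq (x a : int) n : \sum_(y <- x :: nseq n a) y = x + a *+ n.
Proof. by rewrite big_cons sum_nseq0. Qed.

Lemma hsum_mono h (A B : {fset int}) j : (forall a, a \in A -> a \in B) ->
  in_hsum h A j -> in_hsum h B j.
Proof. move=> AB [s [sz [sA sj]]]; exists s; split=> //; split=> // a /sA; exact: AB. Qed.

Lemma extend h (hpos : (0 < h)%N) (A : {fset int}) c (v : nat) :
  interval_in_hsum h A c (c + v%:Z) -> ~ in_hsum h A (c + v%:Z + 1) ->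
  exists x, x \notin A /\ interval_in_hsum h (x |` A) c (c + (v.+1)%:Z) /\
    (subset_N0 A -> subset_N0 (x |` A)).
Proof.
case: h hpos => // h' _ H Hn.
have [s [sz [sA sc]]] : in_hsum h'.+1 A c.
  by apply: H; rewrite lexx /= lerDl.
have [a ias Ha] : exists2 a, a \in s & (size s)%:Z * a <= \sum_(x <- s) x.
  by apply: seq_min; case: s sz {sA sc}.
rewrite sz sc in Ha.
have aA := sA _ ias.
set x := c + v%:Z + 1 - a *+ h'.
have key : forall B : {fset int}, x \in B -> a \in B -> in_hsum h'.+1 B (c + v%:Z + 1).
  move=> B xB aB; exists (x :: nseq h' a); split; first by rewrite /= size_nseq.
  split; last by rewrite sum_nseq /x subrK.
  by move=> y; rewrite inE => /orP [/eqP -> //|]; rewrite mem_nseq => /andP [_ /eqP ->].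
have xnA : x \notin A by apply/negP => xA; apply: Hn; apply: key.
exists x; split=> //; split.
  move=> j /andP [cj jc].
  case: (lerP j (c + v%:Z)) => jv.
    apply: (hsum_mono (A := A)); first by move=> y yA; rewrite inE yA orbT.
    by apply: H; rewrite cj jv.
  have -> : j = c + v%:Z + 1 by move: jc jv; rewrite -addn1 PoszD; lia.
  apply: (key (x |` A)); first exact: fsetU11.
  by rewrite inE aA orbT.
move=> N0 y; rewrite !inE => /orP [/eqP ->|/N0 //].
have a0 := N0 _ aA.
rewrite /x -mulr_natr.
move: Ha a0; nia.
Qed.

Section Generic.
Variables (h : nat) (Adm : {fset int} -> Prop) (L : {fset int} -> nat -> Prop) (k0 : nat).
Hypothesis Bnd : forall A l, L A l -> (l <= #|` A| ^ h)%N.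
Hypothesis Stp : forall A l, Adm A -> L A l -> exists A' l',
  Adm A' /\ #|` A'| = (#|` A|).+1 /\ L A' l' /\ (l < l')%N.
Hypothesis Base : exists A l, Adm A /\ #|` A| = k0 /\ L A l.

Let cand k := exists A l, Adm A /\ #|` A| = k /\ L A l.

Lemma cand_all d : cand (k0 + d).
Proof.
elim: d => [|d [A [l [AA [cA LA]]]]]; first by rewrite addn0.
have [A' [l' [AA' [cA' [LA' _]]]]] := Stp AA LA.
by exists A', l'; rewrite addnS cA' cA.
Qed.

Lemma max_ex k : cand k -> exists v, is_max_over Adm L k v.
Proof.
move=> [A [l [AA [cA LA]]]].
have bnd : forall m, (exists A, Adm A /\ #|` A| = k /\ L A m) -> (m <= k ^ h)%N.
  by move=> m [B [_ [<- LB]]]; apply: Bnd LB.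
have [n [[A0 [AA0 [cA0 LA0]]] Hn]] :=
  @largest (fun v => exists A, Adm A /\ #|` A| = k /\ L A v) (k ^ h) l
   (ex_intro _ A (conj AA (conj cA LA))) bnd.
exists n; split; first by exists A0.
move=> B m AB cB LB; apply: Hn; by exists B.
Qed.

Lemma generic : strictly_increasing_from (is_max_over Adm L) k0.
Proof.
move=> k kk0.
have ck : cand k by rewrite -(subnKC kk0); apply: cand_all.
have [v [[A [AA [cA LA]]] Hv]] := max_ex ck.
have [A' [l' [AA' [cA' [LA' ll']]]]] := Stp AA LA.
have [v' [W Hv']] := max_ex (ex_intro _ A' (ex_intro _ l' (conj AA' (conj cA' LA')))).
exists v, v'; split; first by split=> //; exists A.
split; first by rewrite -cA; split.
apply: leq_trans ll' _; apply: Hv' AA' _ LA'; by rewrite cA' cA.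
Qed.
End Generic.

Lemma ell_bnd h A l : is_ell h A l -> (l <= #|` A| ^ h)%N.
Proof. move=> [H _]; apply: ltnW; apply: (@interval_bound h A 0 l); by rewrite add0r. Qed.

Lemma sharp_bnd h A l : is_ell_sharp h A l -> (l <= #|` A| ^ h)%N.
Proof. move=> [_ [[c H] _]]; apply: ltnW; exact: (interval_bound H). Qed.

Lemma ell_stp h (hpos : (0 < h)%N) A v : is_ell h A v -> exists x, x \notin A /\
  (subset_N0 A -> subset_N0 (x |` A)) /\ exists l', is_ell h (x |` A) l' /\ (v < l')%N.
Proof.
move=> [H Hmax].
have [x [xnA [Hi N0]]] : exists x, x \notin A /\ interval_in_hsum h (x |` A) 0 (0 + (v.+1)%:Z) /\
    (subset_N0 A -> subset_N0 (x |` A)).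
  apply: extend => //.
  move=> Hin; suff: (v.+1 <= v)%N by rewrite ltnn.
  apply: Hmax.
  move=> j /andP [j0 jv]; case: (lerP j v%:Z) => jv'.
    by apply: H; rewrite j0 jv'.
  have -> : j = 0 + v%:Z + 1 by move: jv jv'; rewrite -addn1 PoszD; lia.
  exact: Hin.
exists x; split=> //; split=> //.
rewrite add0r in Hi.
have bnd : forall m, interval_in_hsum h (x |` A) 0 m%:Z -> (m <= #|` x |` A| ^ h)%N.
  by move=> m Hm; apply: ltnW; apply: (@interval_bound h _ 0 m); rewrite add0r.
have [n [Pn Hn]] := @largest (fun m => interval_in_hsum h (x |` A) 0 m%:Z) (#|` x |` A| ^ h) v.+1 Hi bnd.
exists n; split; first by split.
exact: Hn.
Qed.

Lemma sharp_stp h (hpos : (0 < h)%N) A v : is_ell_sharp h A v -> exists x, x \notin A /\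
  (subset_N0 A -> subset_N0 (x |` A)) /\ exists l', is_ell_sharp h (x |` A) l' /\ (v < l')%N.
Proof.
move=> [v1 [[c H] Hmax]].
have [x [xnA [Hi N0]]] : exists x, x \notin A /\ interval_in_hsum h (x |` A) c (c + (v.+1)%:Z) /\
    (subset_N0 A -> subset_N0 (x |` A)).
  apply: extend => //.
  move=> Hin; suff: (v.+1 <= v)%N by rewrite ltnn.
  apply: Hmax => //; exists c.
  move=> j /andP [j0 jv]; case: (lerP j (c + v%:Z)) => jv'.
    by apply: H; rewrite j0 jv'.
  have -> : j = c + v%:Z + 1 by move: jv jv'; rewrite -addn1 PoszD; lia.
  exact: Hin.
exists x; split=> //; split=> //.
have bnd : forall m, (1 <= m /\ exists c, interval_in_hsum h (x |` A) c (c + m%:Z))%N ->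
   (m <= #|` x |` A| ^ h)%N.
  by move=> m [_ [c' Hm]]; apply: ltnW; apply: (interval_bound Hm).
have [n [[n1 Pn] Hn]] := @largest (fun m => 1 <= m /\ exists c, interval_in_hsum h (x |` A) c (c + m%:Z))%N
   (#|` x |` A| ^ h) v.+1 (conj isT (ex_intro _ c Hi)) bnd.
exists n; split.
  by split=> //; split=> // m m1 Pm; apply: Hn.
by apply: Hn; split=> //; exists c.
Qed.

Lemma in_hsum_rep h (A : {fset int}) j : (0 < h)%N -> j \in A -> 0 \in A -> in_hsum h A j.
Proof.
case: h => // h' _ jA zA; exists (j :: nseq h' 0); split; first by rewrite /= size_nseq.
split; last by rewrite sum_nseq mul0rn addr0.
by move=> y; rewrite inE => /orP [/eqP -> //|]; rewrite mem_nseq => /andP [_ /eqP ->].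
Qed.

Lemma card_step h (hpos : (0 < h)%N) (Adm : {fset int} -> Prop) (L : nat -> {fset int} -> nat -> Prop)
  (HA : forall A x, Adm A -> (subset_N0 A -> subset_N0 (x |` A)) -> Adm (x |` A))
  (S : forall A v, L h A v -> exists x, x \notin A /\
    (subset_N0 A -> subset_N0 (x |` A)) /\ exists l', L h (x |` A) l' /\ (v < l')%N) :
  forall A l, Adm A -> L h A l -> exists A' l',
  Adm A' /\ #|` A'| = (#|` A|).+1 /\ L h A' l' /\ (l < l')%N.
Proof.
move=> A l AA LA; have [x [xnA [N0 [l' [L' ll']]]]] := S _ _ LA.
exists (x |` A), l'; split; first exact: HA.
by rewrite cardfsU1 xnA.
Qed.

Lemma ell_exists h (A : {fset int}) (m0 : nat) : interval_in_hsum h A 0 m0%:Z -> exists l, is_ell h A l.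
Proof.
move=> Hi.
have bnd : forall m, interval_in_hsum h A 0 m%:Z -> (m <= #|` A| ^ h)%N.
  by move=> m Hm; apply: ltnW; apply: (@interval_bound h _ 0 m); rewrite add0r.
have [n [Pn Hn]] := @largest (fun m => interval_in_hsum h A 0 m%:Z) _ m0 Hi bnd.
by exists n.
Qed.

Lemma sharp_exists h (A : {fset int}) c : interval_in_hsum h A c (c + 1) -> exists l, is_ell_sharp h A l.
Proof.
move=> Hi.
have bnd : forall m, (1 <= m /\ exists c, interval_in_hsum h A c (c + m%:Z))%N ->
   (m <= #|` A| ^ h)%N.
  by move=> m [_ [c' Hm]]; apply: ltnW; apply: (interval_bound Hm).
have [n [[n1 Pn] Hn]] := @largest (fun m => 1 <= m /\ exists c, interval_in_hsum h A c (c + m%:Z))%N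
   _ 1 (conj isT (ex_intro _ c Hi)) bnd.
exists n; split=> //; split=> // m m1 Pm; exact: Hn.
Qed.

Theorem mainTheorem2 (h : nat) (hpos : (0 < h)%N) :
  strictly_increasing_from (is_n h) 1 /\
  strictly_increasing_from (is_m h) 1 /\
  strictly_increasing_from (is_n_sharp h) 2 /\
  strictly_increasing_from (is_m_sharp h) 2.
Proof.
have [l1 L1] : exists l, is_ell h [fset 0] l.
  apply: (@ell_exists _ _ 0) => j /andP [j0 j1]; have -> : j = 0 by lia.
  by apply: in_hsum_rep; rewrite ?inE.
have [l2 L2] : exists l, is_ell_sharp h [fset 0; 1] l.
  apply: (@sharp_exists _ _ 0) => j /andP [j0 j1].
  by apply: in_hsum_rep; rewrite ?inE //; move: j0 j1; rewrite add0r; lia.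
have N01 : subset_N0 [fset 0]. by move=> a; rewrite inE => /eqP ->.
have N02 : subset_N0 [fset 0; 1]. by move=> a; rewrite !inE => /orP [] /eqP ->.
split; [|split; [|split]].
- apply: (generic (h := h) (@ell_bnd h)).
    apply: (card_step (L := is_ell) hpos) => //; last exact: ell_stp.
    by move=> A x AA HA; apply: HA.
  by exists [fset 0], l1; rewrite cardfs1.
- apply: (generic (h := h) (@ell_bnd h)).
    by apply: (card_step (L := is_ell) hpos) => //; exact: ell_stp.
  by exists [fset 0], l1; rewrite cardfs1.
- apply: (generic (h := h) (@sharp_bnd h)).
    apply: (card_step (L := is_ell_sharp) hpos) => //; last exact: sharp_stp.
    by move=> A x AA HA; apply: HA.
  by exists [fset 0; 1], l2; rewrite cardfs2.
- apply: (generic (h := h) (@sharp_bnd h)).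
    by apply: (card_step (L := is_ell_sharp) hpos) => //; exact: sharp_stp.
  by exists [fset 0; 1], l2; rewrite cardfs2.
Qed.
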